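(* Let $n\ge1$. If $E$ is an equivalence relation on $\mathbb{N}$ which is not $\Sigma^0_n$, then $E$ is not $\Sigma^0_n$-graphable. In particular, for every $n\ge1$ there are $\Pi^0_n$ equivalence relations on $\mathbb{N}$ which are not $\Sigma^0_n$-graphable.
   Context: $E$ is $\Gamma$-graphable if there is a simple undirected graph $G\subseteq\mathbb{N}\times\mathbb{N}$ in $\Gamma$ whose connectedness relation (connected by a finite path) equals $E$. *)

(* Defs.v *)
(* Arithmetical hierarchy on relations on nat, defined via
   first-order arithmetic formulas: a bounded (Delta_0) matrix preceded by
   alternating blocks of unbounded quantifiers. *)
From Stdlib Require Import Arith Relations RelationClasses.

(* Terms of the language of arithmetic; variables are de Bruijn indices. *)
Inductive term : Type :=
| tvar : nat -> term
| tzero : term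
| tsucc : term -> term
| tplus : term -> term -> term
| tmul : term -> term -> term.

Fixpoint teval (env : nat -> nat) (t : term) : nat :=
  match t with
  | tvar k => env k
  | tzero => 0
  | tsucc s => S (teval env s)
  | tplus s u => teval env s + teval env u
  | tmul s u => teval env s * teval env u
  end.

Definition scons (a : nat) (env : nat -> nat) : nat -> nat :=
  fun k => match k with 0 => a | S k' => env k' end.

(* Bounded (Delta_0) formulas. [bforall t phi] means: for all x < t, phi
   (t is evaluated in the outer environment, phi in the extended one). *)
Inductive bform : Type :=
| beq : term -> term -> bform
| blt : term -> term -> bform
| bnot : bform -> bform
| band : bform -> bform -> bform
| bor : bform -> bform -> bform
| bforall : term -> bform -> bform
| bexists : term -> bform -> bform.

Fixpoint bholds (env : nat -> nat) (phi : bform) : Prop :=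
  match phi with
  | beq s u => teval env s = teval env u
  | blt s u => teval env s < teval env u
  | bnot p => ~ bholds env p
  | band p q => bholds env p /\ bholds env q
  | bor p q => bholds env p \/ bholds env q
  | bforall t p => forall x, x < teval env t -> bholds (scons x env) p
  | bexists t p => exists x, x < teval env t /\ bholds (scons x env) p
  end.

Inductive form : Type :=
| fbounded : bform -> form
| fexists : form -> form
| fforall : form -> form.

Fixpoint fholds (env : nat -> nat) (f : form) : Prop :=
  match f with
  | fbounded p => bholds env p
  | fexists g => exists x, fholds (scons x env) g
  | fforall g => forall x, fholds (scons x env) g
  end.

Inductive isSigma : nat -> form -> Prop :=
| sig_b : forall n p, isSigma n (fbounded p)
| sig_ex : forall n f, isSigma (S n) f -> isSigma (S n) (fexists f)
| sig_pi : forall n f, isPi n f -> isSigma (S n) f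
with isPi : nat -> form -> Prop :=
| pi_b : forall n p, isPi n (fbounded p)
| pi_all : forall n f, isPi (S n) f -> isPi (S n) (fforall f)
| pi_sig : forall n f, isSigma n f -> isPi (S n) f.

Definition env2 (x y : nat) : nat -> nat := scons x (scons y (fun _ => 0)).

Definition Sigma0 (n : nat) (R : nat -> nat -> Prop) : Prop :=
  exists f, isSigma n f /\ forall x y, R x y <-> fholds (env2 x y) f.

Definition Pi0 (n : nat) (R : nat -> nat -> Prop) : Prop :=
  exists f, isPi n f /\ forall x y, R x y <-> fholds (env2 x y) f.

Definition graphable (Gamma : (nat -> nat -> Prop) -> Prop)
    (E : nat -> nat -> Prop) : Prop :=
  exists G : nat -> nat -> Prop,
    Gamma G /\
    (forall x y, G x y -> G y x) /\
    (forall x, ~ G x x) /\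
    (forall x y, E x y <-> clos_refl_trans nat G x y).

(* Main.v *)
Require Import Defs.
From Stdlib Require Import Arith Lia List Relations RelationClasses Classical
  FunctionalExtensionality PropExtensionality ClassicalEpsilon.
Import ListNotations.

Fixpoint trename (r : nat -> nat) (t : term) : term :=
  match t with
  | tvar k => tvar (r k)
  | tzero => tzero
  | tsucc s => tsucc (trename r s)
  | tplus s u => tplus (trename r s) (trename r u)
  | tmul s u => tmul (trename r s) (trename r u)
  end.

Lemma teval_rename r env t : teval env (trename r t) = teval (fun k => env (r k)) t.
Proof. induction t; simpl; auto. Qed.

Definition up (r : nat -> nat) : nat -> nat :=
  fun k => match k with 0 => 0 | S k' => S (r k') end.

Lemma scons_up x env r : (fun k => scons x env (up r k)) = scons x (fun k => env (r k)).
Proof. apply functional_extensionality; intros [|k]; reflexivity. Qed.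

Fixpoint brename (r : nat -> nat) (b : bform) : bform :=
  match b with
  | beq s u => beq (trename r s) (trename r u)
  | blt s u => blt (trename r s) (trename r u)
  | bnot p => bnot (brename r p)
  | band p q => band (brename r p) (brename r q)
  | bor p q => bor (brename r p) (brename r q)
  | bforall t p => bforall (trename r t) (brename (up r) p)
  | bexists t p => bexists (trename r t) (brename (up r) p)
  end.

Lemma bholds_rename b : forall r env, bholds env (brename r b) <-> bholds (fun k => env (r k)) b.
Proof.
  induction b; intros r env; simpl; rewrite ?teval_rename; try tauto.
  - rewrite IHb; tauto.
  - rewrite IHb1, IHb2; tauto.
  - rewrite IHb1, IHb2; tauto.
  - split; intros H x Hx; specialize (H x Hx);
      [rewrite IHb, scons_up in H | rewrite IHb, scons_up]; exact H.
  - split; intros [x [Hx H]]; exists x; split; auto;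
      [rewrite IHb, scons_up in H | rewrite IHb, scons_up]; exact H.
Qed.

Fixpoint frename (r : nat -> nat) (f : form) : form :=
  match f with
  | fbounded b => fbounded (brename r b)
  | fexists g => fexists (frename (up r) g)
  | fforall g => fforall (frename (up r) g)
  end.

Lemma fholds_rename f : forall r env, fholds env (frename r f) <-> fholds (fun k => env (r k)) f.
Proof.
  induction f; intros r env; simpl.
  - apply bholds_rename.
  - split; intros [x H]; exists x; [rewrite IHf, scons_up in H | rewrite IHf, scons_up]; exact H.
  - split; intros H x; specialize (H x); [rewrite IHf, scons_up in H | rewrite IHf, scons_up]; exact H.
Qed.

Fixpoint ok (s : bool) (n : nat) (f : form) : Prop :=
  match f with
  | fbounded _ => True
  | fexists g => if s then (1 <= n /\ ok true n g) else (2 <= n /\ ok true (n - 1) g)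
  | fforall g => if s then (2 <= n /\ ok false (n - 1) g) else (1 <= n /\ ok false n g)
  end.

Lemma ok_rename f : forall s n r, ok s n (frename r f) <-> ok s n f.
Proof. induction f; intros [|] n r; simpl; rewrite ?IHf; tauto. Qed.

Lemma ok_mono f : forall n,
  (ok true n f -> ok true (S n) f) /\ (ok false n f -> ok false (S n) f) /\
  (ok false n f -> ok true (S n) f) /\ (ok true n f -> ok false (S n) f).
Proof.
  induction f; intros n; simpl; [tauto| |].
  - destruct n as [|m]; simpl.
    + split; [intros [H _]; lia|]. split; [intros [H _]; lia|]. split; intros [H _]; lia.
    + replace (m - 0) with m by lia.
      pose proof (IHf m) as [A1 _]. pose proof (IHf (S m)) as [B1 _].
      split; [intros [H1 H2]; split; [lia|auto]|].
      split; [intros [H1 H2]; split; [lia|auto]|].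
      split; intros [H1 H2]; split; try lia; auto.
  - destruct n as [|m]; simpl.
    + split; [intros [H _]; lia|]. split; [intros [H _]; lia|]. split; intros [H _]; lia.
    + replace (m - 0) with m by lia.
      pose proof (IHf m) as [_ [A2 _]]. pose proof (IHf (S m)) as [_ [B2 _]].
      split; [intros [H1 H2]; split; [lia|auto]|].
      split; [intros [H1 H2]; split; [lia|auto]|].
      split; intros [H1 H2]; split; try lia; auto.
Qed.

Lemma ok_S_true f n : ok true n f -> ok true (S n) f. Proof. apply ok_mono. Qed.
Lemma ok_S_false f n : ok false n f -> ok false (S n) f. Proof. apply ok_mono. Qed.
Lemma ok_pi_sig f n : ok false n f -> ok true (S n) f. Proof. apply ok_mono. Qed.
Lemma ok_sig_pi f n : ok true n f -> ok false (S n) f. Proof. apply ok_mono. Qed.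

Scheme isSigma_mut := Induction for isSigma Sort Prop
with isPi_mut := Induction for isPi Sort Prop.

Lemma isSigma_ok n f : isSigma n f -> ok true n f.
Proof.
  intro H.
  apply (isSigma_mut (fun n f _ => ok true n f) (fun n f _ => ok false n f)); simpl; auto.
  - intros; split; [lia|auto].
  - intros; apply ok_pi_sig; auto.
  - intros; split; [lia|auto].
  - intros; apply ok_sig_pi; auto.
Qed.

Lemma isPi_ok n f : isPi n f -> ok false n f.
Proof.
  intro H.
  apply (isPi_mut (fun n f _ => ok true n f) (fun n f _ => ok false n f)); simpl; auto.
  - intros; split; [lia|auto].
  - intros; apply ok_pi_sig; auto.
  - intros; split; [lia|auto].
  - intros; apply ok_sig_pi; auto.
Qed.

Lemma ok_isSigma f : forall n, (ok true n f -> isSigma n f) /\ (ok false n f -> isPi n f).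
Proof.
  induction f; intros n; simpl.
  - split; intros _; constructor.
  - split.
    + intros [H1 H2]. destruct n as [|m]; [lia|]. apply sig_ex. apply IHf; auto.
    + intros [H1 H2]. destruct n as [|m]; [lia|]. apply pi_sig.
      destruct m as [|k]; [lia|]. apply sig_ex. apply IHf. replace (S (S k) - 1) with (S k) in H2 by lia. auto.
  - split.
    + intros [H1 H2]. destruct n as [|m]; [lia|]. apply sig_pi.
      destruct m as [|k]; [lia|]. apply pi_all. apply IHf. replace (S (S k) - 1) with (S k) in H2 by lia. auto.
    + intros [H1 H2]. destruct n as [|m]; [lia|]. apply pi_all. apply IHf; auto.
Qed.

Fixpoint dual (f : form) : form :=
  match f with
  | fbounded b => fbounded (bnot b)
  | fexists g => fforall (dual g)
  | fforall g => fexists (dual g)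
  end.

Lemma dual_ok f : forall s n, ok s n f -> ok (negb s) n (dual f).
Proof. induction f; intros [|] n; simpl; auto; intros [H1 H2]; split; auto; apply (IHf _ _ H2). Qed.

Lemma dual_holds f : forall env, fholds env (dual f) <-> ~ fholds env f.
Proof.
  induction f; intros env; simpl; [tauto| |].
  - split.
    + intros H [x Hx]. specialize (H x). apply IHf in H. auto.
    + intros H x. apply IHf. intro Hx. apply H. eauto.
  - split.
    + intros [x Hx] H. apply IHf in Hx. apply Hx, H.
    + intros H. apply NNPP. intro H'. apply H. intro x. apply NNPP. intro Hx.
      apply H'. exists x. apply IHf. auto.
Qed.
Fixpoint psem (env : nat -> nat) (pre : list (bool * term)) (Q : (nat -> nat) -> Prop) : Prop :=
  match pre with
  | [] => Q env
  | (b, t) :: pre' =>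
      if b then forall z, z < teval env t -> psem (scons z env) pre' Q
      else exists z, z < teval env t /\ psem (scons z env) pre' Q
  end.

Lemma psem_mono pre : forall env (Q1 Q2 : (nat -> nat) -> Prop),
  (forall e, Q1 e -> Q2 e) -> psem env pre Q1 -> psem env pre Q2.
Proof.
  induction pre as [|[[|] t] pre IH]; intros env Q1 Q2 HQ; simpl; auto.
  - intros H z Hz. eapply IH; eauto.
  - intros [z [Hz H]]. exists z. split; auto. eapply IH; eauto.
Qed.

Lemma psem_iff pre env (Q1 Q2 : (nat -> nat) -> Prop) :
  (forall e, Q1 e <-> Q2 e) -> (psem env pre Q1 <-> psem env pre Q2).
Proof. intros H; split; apply psem_mono; firstorder. Qed.

Lemma fin_coll T (R : nat -> nat -> Prop) :
  (forall z K K', K <= K' -> R z K -> R z K') ->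
  (forall z, z < T -> exists K, R z K) -> exists K, forall z, z < T -> R z K.
Proof.
  intros Hm. induction T as [|T IH]; intros H.
  - exists 0. intros; lia.
  - destruct IH as [K1 HK1]. { intros z Hz; apply H; lia. }
    destruct (H T) as [K2 HK2]; [lia|].
    exists (max K1 K2). intros z Hz.
    destruct (Nat.eq_dec z T) as [->|Hne].
    + eapply Hm; [|eauto]; lia.
    + eapply Hm; [|apply HK1; lia]; lia.
Qed.

Lemma coll_ex pre : forall env (Y : (nat -> nat) -> nat -> Prop),
  psem env pre (fun e => exists w, Y e w) ->
  exists K, psem env pre (fun e => exists w, w < K /\ Y e w).
Proof.
  induction pre as [|[[|] t] pre IH]; intros env Y; simpl.
  - intros [w Hw]. exists (S w), w. split; auto.
  - intros H.
    destruct (fin_coll (teval env t)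
      (fun z K => psem (scons z env) pre (fun e => exists w, w < K /\ Y e w))) as [K HK].
    + intros z K K' HK H'. eapply psem_mono; [|exact H'].
      intros e [w [Hw1 Hw2]]. exists w. split; auto; lia.
    + intros z Hz. apply IH. auto.
    + exists K. auto.
  - intros [z [Hz H]]. apply IH in H. destruct H as [K HK]. exists K, z. auto.
Qed.

Lemma coll_all pre : forall env (Y : (nat -> nat) -> nat -> Prop),
  (forall K, psem env pre (fun e => forall w, w < K -> Y e w)) ->
  psem env pre (fun e => forall w, Y e w).
Proof.
  induction pre as [|[[|] t] pre IH]; intros env Y; simpl.
  - intros H w. apply (H (S w)). lia.
  - intros H z Hz. apply IH. intros K. apply H. auto.
  - intros H.
    destruct (classic (exists z, z < teval env t /\
       forall K, psem (scons z env) pre (fun e => forall w, w < K -> Y e w))) as [[z [Hz HK]]|Hn].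
    + exists z. split; auto.
    + exfalso.
      destruct (fin_coll (teval env t)
        (fun z K => ~ psem (scons z env) pre (fun e => forall w, w < K -> Y e w))) as [K HK].
      * intros z K K' HKK H' H''. apply H'. eapply psem_mono; [|exact H''].
        intros e He w Hw. apply He. lia.
      * intros z Hz. apply NNPP. intro H'. apply Hn. exists z. split; auto.
        intros K. apply NNPP. intro H''. apply H'. exists K. auto.
      * destruct (H K) as [z [Hz Hp]]. apply (HK z Hz Hp).
Qed.

Definition ins (d K : nat) (env : nat -> nat) : nat -> nat :=
  fun k => if k <? d then env k else if k =? d then K else env (k - 1).
Definition skip (d j : nat) : nat := if j <? d then j else S j.

Lemma ins_skip d K env j : ins d K env (skip d j) = env j.
Proof.
  unfold ins, skip. destruct (Nat.ltb_spec j d).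
  - destruct (Nat.ltb_spec j d); [reflexivity|lia].
  - destruct (Nat.ltb_spec (S j) d); [lia|]. destruct (Nat.eqb_spec (S j) d); [lia|].
    f_equal; lia.
Qed.

Lemma ins_at d K env : ins d K env d = K.
Proof. unfold ins. destruct (Nat.ltb_spec d d); [lia|]. rewrite Nat.eqb_refl. auto. Qed.

Lemma ins0 K env : ins 0 K env = scons K env.
Proof.
  apply functional_extensionality; intros [|k]; unfold ins; simpl; auto.
  f_equal; lia.
Qed.

Lemma scons_ins z d K env : scons z (ins d K env) = ins (S d) K (scons z env).
Proof.
  apply functional_extensionality; intros [|k]; unfold ins; simpl; auto.
  replace (S k <? S d) with (k <? d) by reflexivity. rewrite Nat.sub_0_r.
  destruct (Nat.ltb_spec k d); auto. destruct (Nat.eqb_spec k d); auto.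
  destruct k; [lia|]. simpl. f_equal; lia.
Qed.

Fixpoint shift_pre (d : nat) (pre : list (bool * term)) : list (bool * term) :=
  match pre with
  | [] => []
  | (b, t) :: pre' => (b, trename (skip d) t) :: shift_pre (S d) pre'
  end.

Lemma psem_app pre1 : forall pre2 env Q,
  psem env (pre1 ++ pre2) Q <-> psem env pre1 (fun e => psem e pre2 Q).
Proof.
  induction pre1 as [|[[|] t] pre IH]; intros pre2 env Q; simpl; [tauto| |].
  - split; intros H z Hz; apply IH; auto.
  - split; intros [z [Hz H]]; exists z; split; auto; apply IH; auto.
Qed.

Lemma psem_ins pre : forall d K env Q,
  psem (ins d K env) (shift_pre d pre) Q <->
  psem env pre (fun e => Q (ins (d + length pre) K e)).
Proof.
  induction pre as [|[b t] pre IH]; intros d K env Q; simpl.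
  - rewrite Nat.add_0_r. tauto.
  - rewrite teval_rename.
    assert (E : (fun k => ins d K env (skip d k)) = env)
      by (apply functional_extensionality; intro; apply ins_skip).
    rewrite E. replace (d + S (length pre)) with (S d + length pre) by lia.
    destruct b.
    + split; intros H z Hz; specialize (H z Hz);
        [rewrite scons_ins, IH in H | rewrite scons_ins, IH]; exact H.
    + split; intros [z [Hz H]]; exists z; split; auto;
        [rewrite scons_ins, IH in H | rewrite scons_ins, IH]; exact H.
Qed.

Lemma shift_sem pre b K env Q :
  psem (scons K env) (shift_pre 0 pre ++ [(b, tvar (length pre))]) Q <->
  psem env pre (fun e => psem (ins (length pre) K e) [(b, tvar (length pre))] Q).
Proof.
  rewrite psem_app, <- ins0, psem_ins. simpl. tauto.
Qed.

Definition OP (op : bool) (A B : Prop) : Prop := if op then A /\ B else A \/ B.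
Definition bop (op : bool) (p q : bform) : bform := if op then band p q else bor p q.

Fixpoint bprefix (pre : list (bool * term)) (b : bform) : bform :=
  match pre with
  | [] => b
  | (bb, t) :: pre' => if bb then bforall t (bprefix pre' b) else bexists t (bprefix pre' b)
  end.

Lemma bprefix_sem pre : forall env b, bholds env (bprefix pre b) <-> psem env pre (fun e => bholds e b).
Proof.
  induction pre as [|[[|] t] pre IH]; intros env b; simpl; [tauto| |].
  - split; intros H z Hz; apply IH; auto.
  - split; intros [z [Hz H]]; exists z; split; auto; apply IH; auto.
Qed.

Definition rho' p (r : nat -> nat) : nat -> nat :=
  fun k => match k with 0 => 0 | S k' => S (skip p (r k')) end.
Definition sig' p (s : nat -> nat) : nat -> nat := fun k => S (skip p (s k)).

Lemma rho'_eq p r z K e : (fun k => scons z (ins p K e) (rho' p r k)) = scons z (fun k => e (r k)).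
Proof. apply functional_extensionality; intros [|k]; simpl; auto. apply ins_skip. Qed.
Lemma sig'_eq p s z K e : (fun k => scons z (ins p K e) (sig' p s k)) = (fun k => e (s k)).
Proof. apply functional_extensionality; intros k; simpl; apply ins_skip. Qed.

Lemma sig'_eq2 p (s : nat -> nat) K e : (fun k => ins p K e (skip p (s k))) = (fun k => e (s k)).
Proof. apply functional_extensionality; intros k; apply ins_skip. Qed.

Lemma OP_ex op A (X : nat -> Prop) : OP op A (exists w, X w) <-> exists w, OP op A (X w).
Proof.
  destruct op; simpl; [firstorder|].
  split; [intros [HA|[w Hw]]; [exists 0|exists w]; auto|intros [w [HA|Hw]]; eauto].
Qed.

Lemma OP_all op A (X : nat -> Prop) : OP op A (forall w, X w) <-> forall w, OP op A (X w).
Proof.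
  destruct op; simpl.
  - split; [intros [HA HX] w; auto|intros H; split; [apply (H 0)|intros w; apply H]].
  - split; [intros [HA|HX] w; auto|].
    intros H. destruct (classic A); auto. right. intros w. destruct (H w); tauto.
Qed.

Lemma main f : forall s n, ok s n f -> forall pre rho sg b0 op, exists f', ok s n f' /\
  forall env, fholds env f' <-> psem env pre (fun e =>
     OP op (bholds (fun k => e (sg k)) b0) (fholds (fun k => e (rho k)) f)).
Proof.
  induction f as [b|g IH|g IH]; intros s n Hok pre rho sg b0 op.
  - exists (fbounded (bprefix pre (bop op (brename sg b0) (brename rho b)))).
    split; [exact I|]. intros env; simpl. rewrite bprefix_sem. apply psem_iff. intros e.
    destruct op; simpl; rewrite !bholds_rename; tauto.
  - assert (Hg : exists n', ok true n' g /\ forall g', ok true n' g' -> ok s n (fexists g')).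
    { destruct s; simpl in Hok |- *; destruct Hok as [H1 H2]; eexists; split; eauto. }
    destruct Hg as [n' [Hg Hlift]].
    destruct (IH true n' Hg (shift_pre 0 pre ++ [(false, tvar (length pre))]) (rho' (length pre) rho) (sig' (length pre) sg) b0 op)
      as [g' [Hok' Hsem]].
    exists (fexists g'). split; auto. intros env. simpl fholds.
    rewrite (psem_iff pre env _ (fun e => exists w, OP op (bholds (fun k => e (sg k)) b0)
                  (fholds (scons w (fun k => e (rho k))) g)))
      by (intros; apply OP_ex).
    split.
    + intros [K HK]. rewrite Hsem, shift_sem in HK.
      eapply psem_mono; [|exact HK]. simpl. intros e [z [Hz H]].
      rewrite ins_at in Hz. rewrite ?sig'_eq, ?sig'_eq2, rho'_eq in H. eauto.
    + intros H. apply coll_ex in H. destruct H as [K HK]. exists K.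
      rewrite Hsem, shift_sem. eapply psem_mono; [|exact HK]. simpl.
      intros e [z [Hz H]]. exists z. rewrite ins_at, ?sig'_eq, ?sig'_eq2, rho'_eq. auto.
  - assert (Hg : exists n', ok false n' g /\ forall g', ok false n' g' -> ok s n (fforall g')).
    { destruct s; simpl in Hok |- *; destruct Hok as [H1 H2]; eexists; split; eauto. }
    destruct Hg as [n' [Hg Hlift]].
    destruct (IH false n' Hg (shift_pre 0 pre ++ [(true, tvar (length pre))]) (rho' (length pre) rho) (sig' (length pre) sg) b0 op)
      as [g' [Hok' Hsem]].
    exists (fforall g'). split; auto. intros env. simpl fholds.
    rewrite (psem_iff pre env _ (fun e => forall w, OP op (bholds (fun k => e (sg k)) b0)
                  (fholds (scons w (fun k => e (rho k))) g)))
      by (intros; apply OP_all).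
    split.
    + intros H. apply coll_all. intros K. specialize (H K).
      rewrite Hsem, shift_sem in H. eapply psem_mono; [|exact H]. simpl.
      intros e He w Hw. specialize (He w). rewrite ins_at, ?sig'_eq, ?sig'_eq2, rho'_eq in He. auto.
    + intros H K. rewrite Hsem, shift_sem. eapply psem_mono; [|exact H]. simpl.
      intros e He z Hz. rewrite ins_at in Hz. rewrite ?sig'_eq, ?sig'_eq2, rho'_eq. auto.
Qed.
Definition P (x y : nat) : nat := (x + y) * (x + y) + x.

Lemma P_inj a b c d : P a b = P c d -> a = c /\ b = d.
Proof.
  unfold P; intro H.
  assert (a + b = c + d).
  { destruct (lt_eq_lt_dec (a+b) (c+d)) as [[Hl|He]|Hl]; [nia|auto|nia]. }
  rewrite H0 in H. split; lia.
Qed.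
Lemma P_ge1 x y : x <= P x y. Proof. unfold P; nia. Qed.
Lemma P_ge2 x y : y <= P x y. Proof. unfold P; nia. Qed.

Definition memS (c d N v : nat) : Prop := v < N /\ exists q, q < S c /\ q * S (S v * d) = c.

Lemma divide_fact k n : 1 <= k <= n -> Nat.divide k (fact n).
Proof.
  induction n as [|n IH]; intros H; [lia|].
  simpl fact. destruct (Nat.eq_dec k (S n)) as [->|Hne].
  - replace (fact n + n * fact n) with (S n * fact n) by (simpl; lia).
    apply Nat.divide_mul_l, Nat.divide_refl.
  - replace (fact n + n * fact n) with (S n * fact n) by (simpl; lia).
    apply Nat.divide_mul_r, IH; lia.
Qed.

Lemma gcd_m v w N : v <> w -> v < N -> w < N ->
  Nat.gcd (S (S v * fact N)) (S (S w * fact N)) = 1.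
Proof.
  revert v w.
  assert (Hgen : forall v w, w < v -> v < N ->
     Nat.gcd (S (S v * fact N)) (S (S w * fact N)) = 1).
  { intros v w Hwv HvN.
    set (d := fact N). set (g := Nat.gcd (S (S v * d)) (S (S w * d))).
    assert (H1 : Nat.divide g (S (S v * d))) by apply Nat.gcd_divide_l.
    assert (H2 : Nat.divide g (S (S w * d))) by apply Nat.gcd_divide_r.
    assert (E : S v * S (S w * d) = S w * S (S v * d) + (v - w)) by nia.
    assert (H3 : Nat.divide g (v - w)).
    { apply (Nat.divide_add_cancel_r _ (S w * S (S v * d))).
      - apply Nat.divide_mul_r; auto.
      - rewrite <- E. apply Nat.divide_mul_r; auto. }
    assert (H4 : Nat.divide g d).
    { eapply Nat.divide_trans; [exact H3|]. apply divide_fact; lia. }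
    assert (H5 : Nat.divide g 1).
    { apply (Nat.divide_add_cancel_r _ (S v * d)).
      - apply Nat.divide_mul_r; auto.
      - replace (S v * d + 1) with (S (S v * d)) by lia. auto. }
    apply Nat.divide_1_r; auto. }
  intros v w Hne Hv Hw.
  destruct (Nat.lt_total v w) as [Hl|[He|Hl]].
  - rewrite Nat.gcd_comm. apply Hgen; lia.
  - exfalso; lia.
  - apply Hgen; auto.
Qed.

Definition prodm (d : nat) (F : list nat) : nat := fold_right (fun v acc => S (S v * d) * acc) 1 F.

Lemma prodm_div d F v : In v F -> exists q, q * S (S v * d) = prodm d F.
Proof.
  induction F as [|w F IH]; simpl; [contradiction|]. intros [->|Hin].
  - exists (prodm d F). lia.
  - destruct (IH Hin) as [q Hq]. exists (S (S w * d) * q). rewrite <- Hq. lia.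
Qed.

Lemma set_code F : exists c d N, forall v, memS c d N v <-> In v F.
Proof.
  set (N := S (list_max F)). set (d := fact N).
  exists (prodm d F), d, N. intros v. unfold memS. split.
  - intros [HvN [q [Hq Hqc]]].
    destruct (classic (In v F)) as [Hin|Hnin]; auto. exfalso.
    assert (Hd : 1 <= d) by (pose proof (lt_O_fact N); unfold d; lia).
    assert (Hgen : forall G, (forall w, In w G -> w < N /\ w <> v) ->
              Nat.divide (S (S v * d)) (prodm d G) -> Nat.divide (S (S v * d)) 1).
    { induction G as [|w G IH]; intros HG Hdiv; simpl in Hdiv; auto.
      apply IH; [intros; apply HG; simpl; auto|].
      apply (Nat.gauss _ (S (S w * d))); auto.
      destruct (HG w) as [Hw1 Hw2]; [simpl; auto|]. unfold d. apply gcd_m; auto. }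
    assert (Hdv : Nat.divide (S (S v * d)) 1).
    { apply (Hgen F).
      - intros w Hw. split.
        + pose proof (list_max_le F (list_max F)) as [Hl _]. 
          assert (Hle : Forall (fun k => k <= list_max F) F) by (apply Hl; lia).
          rewrite Forall_forall in Hle. specialize (Hle w Hw). unfold N; lia.
        + intro; subst; auto.
      - exists q. rewrite Hqc. reflexivity. }
    apply Nat.divide_1_r in Hdv. nia.
  - intros Hin. split.
    + pose proof (list_max_le F (list_max F)) as [Hl _].
      assert (Hle : Forall (fun k => k <= list_max F) F) by (apply Hl; lia).
      rewrite Forall_forall in Hle. specialize (Hle v Hin). unfold N; lia.
    + destruct (prodm_div d F v Hin) as [q Hq]. exists q. split; [|auto].
      assert (1 <= S (S v * d)) by lia. nia.
Qed.
Inductive nt := nv (x : nat) | nz | ns (t : nt) | npl (t u : nt) | nmu (t u : nt) | npr (t u : nt).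
Inductive nf :=
| neq (s u : nt) | nlt (s u : nt) | nnot (p : nf) | nand (p q : nf) | nor (p q : nf)
| nall (x : nat) (t : nt) (p : nf) | nex (x : nat) (t : nt) (p : nf)
| nmem (c d N v : nt).

Definition upd (a : nat -> nat) (x z : nat) : nat -> nat := fun y => if Nat.eqb y x then z else a y.

Fixpoint neval (a : nat -> nat) (t : nt) : nat :=
  match t with
  | nv x => a x | nz => 0 | ns t => S (neval a t)
  | npl t u => neval a t + neval a u | nmu t u => neval a t * neval a u
  | npr t u => P (neval a t) (neval a u)
  end.

Fixpoint nholds (a : nat -> nat) (p : nf) : Prop :=
  match p with
  | neq s u => neval a s = neval a u
  | nlt s u => neval a s < neval a u
  | nnot p => ~ nholds a p
  | nand p q => nholds a p /\ nholds a q
  | nor p q => nholds a p \/ nholds a q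
  | nall x t p => forall z, z < neval a t -> nholds (upd a x z) p
  | nex x t p => exists z, z < neval a t /\ nholds (upd a x z) p
  | nmem c d N v => memS (neval a c) (neval a d) (neval a N) (neval a v)
  end.

Fixpoint idx (ctx : list nat) (x : nat) : nat :=
  match ctx with [] => 0 | y :: ctx' => if Nat.eqb x y then 0 else S (idx ctx' x) end.

Fixpoint compT (ctx : list nat) (t : nt) : term :=
  match t with
  | nv x => tvar (idx ctx x) | nz => tzero | ns t => tsucc (compT ctx t)
  | npl t u => tplus (compT ctx t) (compT ctx u)
  | nmu t u => tmul (compT ctx t) (compT ctx u)
  | npr t u => tplus (tmul (tplus (compT ctx t) (compT ctx u)) (tplus (compT ctx t) (compT ctx u)))
                     (compT ctx t)
  end.

Fixpoint compF (ctx : list nat) (p : nf) : bform :=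
  match p with
  | neq s u => beq (compT ctx s) (compT ctx u)
  | nlt s u => blt (compT ctx s) (compT ctx u)
  | nnot p => bnot (compF ctx p)
  | nand p q => band (compF ctx p) (compF ctx q)
  | nor p q => bor (compF ctx p) (compF ctx q)
  | nall x t p => bforall (compT ctx t) (compF (x :: ctx) p)
  | nex x t p => bexists (compT ctx t) (compF (x :: ctx) p)
  | nmem c d N v =>
      band (blt (compT ctx v) (compT ctx N))
        (bexists (tsucc (compT ctx c))
          (beq (tmul (tvar 0) (tsucc (tmul (tsucc (trename S (compT ctx v))) (trename S (compT ctx d)))))
               (trename S (compT ctx c))))
  end.

Lemma compT_ok t : forall ctx env a, (forall x, a x = env (idx ctx x)) ->
  teval env (compT ctx t) = neval a t.
Proof.
  induction t; intros ctx env a H; simpl; auto;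
    try rewrite (IHt ctx env a H); try rewrite (IHt1 ctx env a H), (IHt2 ctx env a H); auto.
Qed.

Lemma lift_eval z env t : teval (scons z env) (trename S t) = teval env t.
Proof. rewrite teval_rename. reflexivity. Qed.

Lemma inv_upd ctx env a x z : (forall y, a y = env (idx ctx y)) ->
  forall y, upd a x z y = scons z env (idx (x :: ctx) y).
Proof. intros H y. unfold upd; simpl. destruct (Nat.eqb y x); simpl; auto. Qed.

Lemma compF_ok p : forall ctx env a, (forall x, a x = env (idx ctx x)) ->
  (bholds env (compF ctx p) <-> nholds a p).
Proof.
  induction p; intros ctx env a H; simpl; rewrite ?(compT_ok _ ctx env a H); try tauto.
  - rewrite (IHp ctx env a H); tauto.
  - rewrite (IHp1 ctx env a H), (IHp2 ctx env a H); tauto.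
  - rewrite (IHp1 ctx env a H), (IHp2 ctx env a H); tauto.
  - split; intros H1 z Hz; specialize (H1 z Hz);
      [rewrite (IHp (x :: ctx) (scons z env) (upd a x z)) in H1
      |rewrite (IHp (x :: ctx) (scons z env) (upd a x z))]; auto; apply inv_upd; auto.
  - split; intros [z [Hz H1]]; exists z; split; auto;
      [rewrite (IHp (x :: ctx) (scons z env) (upd a x z)) in H1
      |rewrite (IHp (x :: ctx) (scons z env) (upd a x z))]; auto; apply inv_upd; auto.
  - setoid_rewrite lift_eval. setoid_rewrite (compT_ok _ ctx env a H). unfold memS; simpl. tauto.
Qed.

Definition actx (ctx : list nat) (env : nat -> nat) : nat -> nat := fun x => env (idx ctx x).

Lemma compF_ok' ctx p env : bholds env (compF ctx p) <-> nholds (actx ctx env) p.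
Proof. apply compF_ok. intros; reflexivity. Qed.
Definition ReachS (G : nat -> nat -> Prop) (x y : nat) : Prop :=
  x = y \/ exists c d N m, 0 < m /\ memS c d N (P 0 x) /\ memS c d N (P m y) /\
    (forall i, i < S m -> exists a, a < N /\ memS c d N (P i a)) /\
    (forall i, i < m -> forall a, a < N -> forall b, b < N ->
        (~ memS c d N (P i a) \/ ~ memS c d N (P (S i) b)) \/ G a b).

Lemma memS_lt c d N v : memS c d N v -> v < N.
Proof. intros [H _]; auto. Qed.

Lemma rt_path (G : nat -> nat -> Prop) x y : clos_refl_trans nat G x y ->
  exists f m, f 0 = x /\ f m = y /\ forall i, i < m -> G (f i) (f (S i)).
Proof.
  intros H. apply clos_rt_rt1n in H. induction H as [x|x z y Hxz _ [f [m [H0 [Hm Hs]]]]].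
  - exists (fun _ => x), 0. repeat split; intros; lia.
  - exists (fun i => match i with 0 => x | S i' => f i' end), (S m). repeat split; auto.
    intros [|i] Hi; [subst; auto|]. apply Hs; lia.
Qed.

Lemma ReachS_iff G x y : ReachS G x y <-> clos_refl_trans nat G x y.
Proof.
  split.
  - intros [->|[c [d [N [m [Hm [Hx [Hy [Hne He]]]]]]]]]; [apply rt_refl|].
    assert (Hc : forall j, 1 <= j <= m -> forall b, memS c d N (P j b) -> clos_refl_trans nat G x b).
    { intros j Hj. induction j as [|j IH]; [lia|]. intros b Hb.
      assert (HbN : b < N) by (pose proof (memS_lt _ _ _ _ Hb); pose proof (P_ge2 (S j) b); lia).
      destruct (Nat.eq_dec j 0) as [->|Hj0].
      + assert (HxN : x < N) by (pose proof (memS_lt _ _ _ _ Hx); pose proof (P_ge2 0 x); lia).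
        destruct (He 0 ltac:(lia) x HxN b HbN) as [[H|H]|H]; try contradiction. apply rt_step; auto.
      + destruct (Hne j ltac:(lia)) as [a [HaN Ha]].
        apply rt_trans with a; [apply IH; auto; lia|].
        destruct (He j ltac:(lia) a HaN b HbN) as [[H|H]|H]; try contradiction. apply rt_step; auto. }
    apply (Hc m); auto; lia.
  - intros H. destruct (rt_path G x y H) as [f [m [H0 [Hm Hs]]]].
    destruct m as [|m]; [left; subst; auto|right].
    destruct (set_code (map (fun i => P i (f i)) (seq 0 (S (S m))))) as [c [d [N HN]]].
    assert (Hin : forall i, i < S (S m) -> memS c d N (P i (f i))).
    { intros i Hi. apply HN. apply in_map_iff. exists i. split; auto. apply in_seq. lia. }
    assert (Hinv : forall i a, memS c d N (P i a) -> a = f i /\ i < S (S m)).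
    { intros i a Hm'. apply HN in Hm'. apply in_map_iff in Hm'. destruct Hm' as [j [Hj Hj']].
      apply P_inj in Hj. destruct Hj as [-> ->]. apply in_seq in Hj'. split; auto; lia. }
    exists c, d, N, (S m). refine (conj _ (conj _ (conj _ (conj _ _)))); [lia| | | |].
    + rewrite <- H0. apply Hin. lia.
    + rewrite <- Hm. apply Hin. lia.
    + intros i Hi. exists (f i). split; [|apply Hin; auto].
      pose proof (memS_lt _ _ _ _ (Hin i Hi)). pose proof (P_ge2 i (f i)). lia.
    + intros i Hi a Ha b Hb.
      destruct (classic (memS c d N (P i a))) as [Ha'|Ha']; [|left; left; auto].
      destruct (classic (memS c d N (P (S i) b))) as [Hb'|Hb']; [|left; right; auto].
      right. apply Hinv in Ha'. apply Hinv in Hb'. destruct Ha' as [-> _]. destruct Hb' as [-> _].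
      apply Hs. auto.
Qed.

Definition ctx10 := [0;1;2;3;4;5;6;7;8;9;10;11;12;13;14;15].

Definition B2n : nf :=
  nor (nnot (nmem (nv 7) (nv 6) (nv 5) (npr (nv 3) (nv 2))))
      (nnot (nmem (nv 7) (nv 6) (nv 5) (npr (ns (nv 3)) (nv 1)))).
Definition B1n : nf :=
  nand (nlt nz (nv 0)) (nand (nmem (nv 3) (nv 2) (nv 1) (npr nz (nv 4)))
   (nand (nmem (nv 3) (nv 2) (nv 1) (npr (nv 0) (nv 5)))
     (nall 20 (ns (nv 0)) (nex 21 (nv 1) (nmem (nv 3) (nv 2) (nv 1) (npr (nv 20) (nv 21))))))).
Definition B0n : nf := neq (nv 0) (nv 1).

Definition rhoG : nat -> nat := fun k => match k with 0 => 2 | 1 => 1 | _ => 0 end.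

Lemma B1_sem e : nholds (actx ctx10 e) B1n <-> 0 < e 0 /\ memS (e 3) (e 2) (e 1) (P 0 (e 4)) /\
   memS (e 3) (e 2) (e 1) (P (e 0) (e 5)) /\
   (forall i, i < S (e 0) -> exists a, a < e 1 /\ memS (e 3) (e 2) (e 1) (P i a)).
Proof. reflexivity. Qed.

Lemma B2_sem e : bholds e (compF ctx10 B2n) <->
  ~ memS (e 7) (e 6) (e 5) (P (e 3) (e 2)) \/ ~ memS (e 7) (e 6) (e 5) (P (S (e 3)) (e 1)).
Proof. rewrite compF_ok'. reflexivity. Qed.

Lemma rhoG_env z1 z0 X : (fun k => scons 0 (scons z1 (scons z0 X)) (rhoG k)) = env2 z0 z1.
Proof. apply functional_extensionality; intros [|[|k]]; reflexivity. Qed.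

Lemma reach_sig n fG : 1 <= n -> ok true n fG -> exists f, ok true n f /\
  forall x y, fholds (env2 x y) f <-> clos_refl_trans nat (fun a b => fholds (env2 a b) fG) x y.
Proof.
  intros Hn HfG.
  destruct (main fG true n HfG [(true, tvar 0); (true, tvar 2); (true, tvar 3); (true, tsucc tzero)]
              rhoG (fun k => k) (compF ctx10 B2n) false) as [f1 [Hok1 H1]].
  destruct (main f1 true n Hok1 [] (fun k => k) (fun k => k) (compF ctx10 B1n) true) as [f2 [Hok2 H2]].
  set (G := fun a b => fholds (env2 a b) fG).
  assert (Hf2 : forall env, fholds env f2 <-> (0 < env 0 /\ memS (env 3) (env 2) (env 1) (P 0 (env 4)) /\
   memS (env 3) (env 2) (env 1) (P (env 0) (env 5)) /\
   (forall i, i < S (env 0) -> exists a, a < env 1 /\ memS (env 3) (env 2) (env 1) (P i a))) /\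
   (forall i, i < env 0 -> forall a, a < env 1 -> forall b, b < env 1 ->
        (~ memS (env 3) (env 2) (env 1) (P i a) \/ ~ memS (env 3) (env 2) (env 1) (P (S i) b)) \/ G a b)).
  { intros env. rewrite H2. cbn [psem]. unfold OP. rewrite compF_ok', B1_sem.
    apply and_iff_compat_l. rewrite H1. cbn [psem teval].
    split; intros H i Hi a Ha b Hb.
    - specialize (H i Hi a Ha b Hb 0 Nat.lt_0_1). unfold OP in H. rewrite B2_sem, rhoG_env in H. exact H.
    - intros z Hz. assert (z = 0) by lia. subst z. unfold OP. rewrite B2_sem, rhoG_env. apply H; auto. }
  set (f3 := fexists (fexists (fexists (fexists f2)))).
  assert (Hok3 : ok true n f3) by (simpl; repeat split; auto).
  destruct (main f3 true n Hok3 [] (fun k => k) (fun k => k) (compF ctx10 B0n) false) as [f4 [Hok4 H4]].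
  exists f4. split; auto. intros x y. rewrite <- ReachS_iff.
  rewrite H4. simpl psem. unfold ReachS. apply or_iff_compat_l.
  split.
  - intros [c [d [N [m H]]]]. exists c, d, N, m. rewrite Hf2 in H. simpl in H. tauto.
  - intros [c [d [N [m H]]]]. exists c, d, N, m. rewrite Hf2. simpl. tauto.
Qed.
Inductive pf :=
| peq (s u : term) | plt (s u : term) | pand (p q : pf) | por (p q : pf)
| pall (t : term) (p : pf) | pex (t : term) (p : pf) | pexu (p : pf).

Fixpoint pfsem (env : nat -> nat) (p : pf) : Prop :=
  match p with
  | peq s u => teval env s = teval env u
  | plt s u => teval env s < teval env u
  | pand p q => pfsem env p /\ pfsem env q
  | por p q => pfsem env p \/ pfsem env q
  | pall t p => forall x, x < teval env t -> pfsem (scons x env) p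
  | pex t p => exists x, x < teval env t /\ pfsem (scons x env) p
  | pexu p => exists x, pfsem (scons x env) p
  end.

Fixpoint nnf (s : bool) (b : bform) : pf :=
  match b with
  | beq u v => if s then peq u v else por (plt u v) (plt v u)
  | blt u v => if s then plt u v else por (plt v u) (peq u v)
  | bnot p => nnf (negb s) p
  | band p q => if s then pand (nnf true p) (nnf true q) else por (nnf false p) (nnf false q)
  | bor p q => if s then por (nnf true p) (nnf true q) else pand (nnf false p) (nnf false q)
  | bforall t p => if s then pall t (nnf true p) else pex t (nnf false p)
  | bexists t p => if s then pex t (nnf true p) else pall t (nnf false p)
  end.

Lemma nnf_ok b : forall env, (pfsem env (nnf true b) <-> bholds env b) /\
                             (pfsem env (nnf false b) <-> ~ bholds env b).
Proof.
  induction b; intros env; simpl.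
  - split; [tauto|]. lia.
  - split; [tauto|]. lia.
  - destruct (IHb env) as [H1 H2]. rewrite H1, H2. split; [tauto|]. split; [tauto|]. apply NNPP.
  - destruct (IHb1 env) as [H1 H2]. destruct (IHb2 env) as [H3 H4].
    rewrite H1, H2, H3, H4. split; [tauto|]. split; [tauto|].
    intros H. destruct (classic (bholds env b1)); tauto.
  - destruct (IHb1 env) as [H1 H2]. destruct (IHb2 env) as [H3 H4].
    rewrite H1, H2, H3, H4. split; tauto.
  - split.
    + split; intros H x Hx; apply (IHb (scons x env)); auto.
    + split.
      * intros [x [Hx H]] H'. apply (IHb (scons x env)) in H. apply H, H'; auto.
      * intros H. apply NNPP. intros H'. apply H. intros x Hx. apply NNPP. intros H''.
        apply H'. exists x. split; auto. apply (IHb (scons x env)). auto.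
  - split.
    + split; intros [x [Hx H]]; exists x; split; auto; apply (IHb (scons x env)); auto.
    + split.
      * intros H [x [Hx H']]. specialize (H x Hx). apply (IHb (scons x env)) in H. auto.
      * intros H x Hx. apply (IHb (scons x env)). intros H'. apply H. eauto.
Qed.

Fixpoint sig1 (f : form) : pf :=
  match f with
  | fbounded b => nnf true b
  | fexists g => pexu (sig1 g)
  | fforall _ => peq (tsucc tzero) tzero
  end.

Lemma sig1_ok f : ok true 1 f -> forall env, fholds env f <-> pfsem env (sig1 f).
Proof.
  induction f; simpl; intros Hok env.
  - symmetry. apply nnf_ok.
  - destruct Hok as [_ Hok]. split; intros [x H]; exists x; apply IHf; auto.
  - lia.
Qed.

Fixpoint cT (t : term) : nat :=
  match t with
  | tvar k => P 0 k
  | tzero => P 1 0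
  | tsucc s => P 2 (cT s)
  | tplus s u => P 3 (P (cT s) (cT u))
  | tmul s u => P 4 (P (cT s) (cT u))
  end.

Fixpoint cP (p : pf) : nat :=
  match p with
  | peq s u => P 0 (P (cT s) (cT u))
  | plt s u => P 1 (P (cT s) (cT u))
  | pand p q => P 2 (P (cP p) (cP q))
  | por p q => P 3 (P (cP p) (cP q))
  | pall t p => P 4 (P (cT t) (cP p))
  | pex t p => P 5 (P (cT t) (cP p))
  | pexu p => P 6 (cP p)
  end.

Definition TVc (t l v : nat) : nat := P 0 (P t (P l v)).
Definition TRc (p l : nat) : nat := P 1 (P p l).

Fixpoint enc (L : list nat) : nat :=
  match L with [] => 0 | x :: L' => S (P x (enc L')) end.

Fixpoint envL (L : list nat) : nat -> nat :=
  match L with [] => fun _ => 0 | x :: L' => scons x (envL L') end.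

Definition TVJ (M : nat -> Prop) (N t l v : nat) : Prop :=
  (exists k, k < N /\ t = P 0 k /\ ((l = 0 /\ v = 0) \/
     exists x, x < N /\ exists l', l' < N /\ l = S (P x l') /\
       ((k = 0 /\ v = x) \/ exists k', k' < N /\ k = S k' /\ M (TVc (P 0 k') l' v))))
  \/ (t = P 1 0 /\ v = 0)
  \/ (exists s, s < N /\ exists v', v' < N /\ t = P 2 s /\ v = S v' /\ M (TVc s l v'))
  \/ (exists s, s < N /\ exists u, u < N /\ exists v1, v1 < N /\ exists v2, v2 < N /\
        t = P 3 (P s u) /\ v = v1 + v2 /\ M (TVc s l v1) /\ M (TVc u l v2))
  \/ (exists s, s < N /\ exists u, u < N /\ exists v1, v1 < N /\ exists v2, v2 < N /\
        t = P 4 (P s u) /\ v = v1 * v2 /\ M (TVc s l v1) /\ M (TVc u l v2)).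

Definition TRJ (M : nat -> Prop) (N p l : nat) : Prop :=
  (exists s, s < N /\ exists u, u < N /\ exists v, v < N /\
     p = P 0 (P s u) /\ M (TVc s l v) /\ M (TVc u l v))
  \/ (exists s, s < N /\ exists u, u < N /\ exists v1, v1 < N /\ exists v2, v2 < N /\
     p = P 1 (P s u) /\ v1 < v2 /\ M (TVc s l v1) /\ M (TVc u l v2))
  \/ (exists q, q < N /\ exists r, r < N /\ p = P 2 (P q r) /\ M (TRc q l) /\ M (TRc r l))
  \/ (exists q, q < N /\ exists r, r < N /\ p = P 3 (P q r) /\ (M (TRc q l) \/ M (TRc r l)))
  \/ (exists t, t < N /\ exists q, q < N /\ exists v, v < N /\ p = P 4 (P t q) /\
       M (TVc t l v) /\ forall x, x < v -> M (TRc q (S (P x l))))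
  \/ (exists t, t < N /\ exists q, q < N /\ exists v, v < N /\ p = P 5 (P t q) /\
       M (TVc t l v) /\ exists x, x < v /\ M (TRc q (S (P x l))))
  \/ (exists q, q < N /\ exists x, x < N /\ p = P 6 q /\ M (TRc q (S (P x l)))).

Definition JustS (M : nat -> Prop) (N z : nat) : Prop :=
  (exists t, t < N /\ exists l, l < N /\ exists v, v < N /\ z = TVc t l v /\ TVJ M N t l v)
  \/ (exists p, p < N /\ exists l, l < N /\ z = TRc p l /\ TRJ M N p l).

(* named version; N = 0, d = 1, c = 2, z = 10 *)
Fixpoint nnum (k : nat) : nt := match k with 0 => nz | S k => ns (nnum k) end.
Definition nTV t l v := npr nz (npr t (npr l v)).
Definition nTR p l := npr (ns nz) (npr p l).
Definition nM w := nmem (nv 2) (nv 1) (nv 0) w.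
Definition nE x body := nex x (nv 0) body.

Definition NTV1 : nf :=
  nE 30 (nand (neq (nv 20) (npr nz (nv 30)))
    (nor (nand (neq (nv 21) nz) (neq (nv 22) nz))
      (nE 31 (nE 32 (nand (neq (nv 21) (ns (npr (nv 31) (nv 32))))
        (nor (nand (neq (nv 30) nz) (neq (nv 22) (nv 31)))
          (nE 33 (nand (neq (nv 30) (ns (nv 33))) (nM (nTV (npr nz (nv 33)) (nv 32) (nv 22)))))))))))
.
Definition NTV3 : nf :=
  nE 30 (nE 31 (nand (neq (nv 20) (npr (nnum 2) (nv 30)))
    (nand (neq (nv 22) (ns (nv 31))) (nM (nTV (nv 30) (nv 21) (nv 31)))))).
Definition NTV45 (tag : nat) (op : nt -> nt -> nt) : nf :=
  nE 30 (nE 31 (nE 32 (nE 33 (nand (neq (nv 20) (npr (nnum tag) (npr (nv 30) (nv 31))))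
    (nand (neq (nv 22) (op (nv 32) (nv 33)))
      (nand (nM (nTV (nv 30) (nv 21) (nv 32))) (nM (nTV (nv 31) (nv 21) (nv 33))))))))).
Definition NTVJ : nf :=
  nor NTV1 (nor (nand (neq (nv 20) (npr (nnum 1) nz)) (neq (nv 22) nz))
   (nor NTV3 (nor (NTV45 3 npl) (NTV45 4 nmu)))).

Definition NTRJ : nf :=
 nor (nE 30 (nE 31 (nE 32 (nand (neq (nv 20) (npr nz (npr (nv 30) (nv 31))))
        (nand (nM (nTV (nv 30) (nv 21) (nv 32))) (nM (nTV (nv 31) (nv 21) (nv 32))))))))
 (nor (nE 30 (nE 31 (nE 32 (nE 33 (nand (neq (nv 20) (npr (nnum 1) (npr (nv 30) (nv 31))))
        (nand (nlt (nv 32) (nv 33))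
          (nand (nM (nTV (nv 30) (nv 21) (nv 32))) (nM (nTV (nv 31) (nv 21) (nv 33))))))))))
 (nor (nE 30 (nE 31 (nand (neq (nv 20) (npr (nnum 2) (npr (nv 30) (nv 31))))
        (nand (nM (nTR (nv 30) (nv 21))) (nM (nTR (nv 31) (nv 21)))))))
 (nor (nE 30 (nE 31 (nand (neq (nv 20) (npr (nnum 3) (npr (nv 30) (nv 31))))
        (nor (nM (nTR (nv 30) (nv 21))) (nM (nTR (nv 31) (nv 21)))))))
 (nor (nE 30 (nE 31 (nE 32 (nand (neq (nv 20) (npr (nnum 4) (npr (nv 30) (nv 31))))
        (nand (nM (nTV (nv 30) (nv 21) (nv 32)))
          (nall 33 (nv 32) (nM (nTR (nv 31) (ns (npr (nv 33) (nv 21)))))))))))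
 (nor (nE 30 (nE 31 (nE 32 (nand (neq (nv 20) (npr (nnum 5) (npr (nv 30) (nv 31))))
        (nand (nM (nTV (nv 30) (nv 21) (nv 32)))
          (nex 33 (nv 32) (nM (nTR (nv 31) (ns (npr (nv 33) (nv 21)))))))))))
 (nE 30 (nE 31 (nand (neq (nv 20) (npr (nnum 6) (nv 30))) (nM (nTR (nv 30) (ns (npr (nv 31) (nv 21))))))))))))).

Definition NJust : nf :=
  nor (nE 20 (nE 21 (nE 22 (nand (neq (nv 10) (nTV (nv 20) (nv 21) (nv 22))) NTVJ))))
      (nE 20 (nE 21 (nand (neq (nv 10) (nTR (nv 20) (nv 21))) NTRJ))).

Lemma NJust_sem a : nholds a NJust <-> JustS (memS (a 2) (a 1) (a 0)) (a 0) (a 10).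
Proof. reflexivity. Qed.
Definition Closed c d N := forall z, z < N -> memS c d N z -> JustS (memS c d N) N z.
Definition U0 (e l : nat) : Prop := exists c d N, Closed c d N /\ memS c d N (TRc e l).

Ltac pinj := repeat match goal with
  | H : P _ _ = P _ _ |- _ => apply P_inj in H; destruct H as [? ?]
  | H : S _ = S _ |- _ => injection H as H
  end; subst; try discriminate.

Lemma inv_TV c d N t l v : Closed c d N -> memS c d N (TVc t l v) -> TVJ (memS c d N) N t l v.
Proof.
  intros HC Hm. destruct (HC _ (memS_lt _ _ _ _ Hm) Hm) as
    [[t' [_ [l' [_ [v' [_ [E J]]]]]]]|[p [_ [l' [_ [E J]]]]]]; unfold TVc, TRc in E; pinj; auto.
Qed.

Lemma inv_TR c d N p l : Closed c d N -> memS c d N (TRc p l) -> TRJ (memS c d N) N p l.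
Proof.
  intros HC Hm. destruct (HC _ (memS_lt _ _ _ _ Hm) Hm) as
    [[t' [_ [l' [_ [v' [_ [E J]]]]]]]|[p' [_ [l' [_ [E J]]]]]]; unfold TVc, TRc in E; pinj; auto.
Qed.

Ltac crush := repeat (match goal with
  | H : _ /\ _ |- _ => destruct H
  | H : exists _, _ |- _ => destruct H
  | H : _ \/ _ |- _ => destruct H
  end); cbn [enc] in *; pinj.

Lemma sound_var c d N (HC : Closed c d N) : forall L k v,
  memS c d N (TVc (P 0 k) (enc L) v) -> v = envL L k.
Proof.
  induction L as [|x L IH]; intros k v Hm; apply (inv_TV _ _ _ _ _ _ HC) in Hm;
    unfold TVJ in Hm; crush; simpl; try reflexivity; try (eapply IH; eassumption).
Qed.

Lemma sound_TV c d N (HC : Closed c d N) : forall T L v,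
  memS c d N (TVc (cT T) (enc L) v) -> v = teval (envL L) T.
Proof.
  induction T; intros L v Hm; simpl in Hm |- *.
  - apply (sound_var _ _ _ HC). auto.
  - apply (inv_TV _ _ _ _ _ _ HC) in Hm. unfold TVJ in Hm. crush; auto.
  - apply (inv_TV _ _ _ _ _ _ HC) in Hm. unfold TVJ in Hm. crush; auto.
    all: try (f_equal; apply IHT; auto).
  - apply (inv_TV _ _ _ _ _ _ HC) in Hm. unfold TVJ in Hm. crush; auto.
    all: try (f_equal; [apply IHT1|apply IHT2]; auto).
  - apply (inv_TV _ _ _ _ _ _ HC) in Hm. unfold TVJ in Hm. crush; auto.
    all: try (f_equal; [apply IHT1|apply IHT2]; auto).
Qed.

Lemma sound_TR c d N (HC : Closed c d N) : forall p L,
  memS c d N (TRc (cP p) (enc L)) -> pfsem (envL L) p.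
Proof.
  induction p; intros L Hm; simpl in Hm |- *; apply (inv_TR _ _ _ _ _ HC) in Hm;
    unfold TRJ in Hm; crush.
  - match goal with H1 : memS _ _ _ (TVc (cT s) _ _), H2 : memS _ _ _ (TVc (cT u) _ _) |- _ =>
      apply (sound_TV _ _ _ HC) in H1; apply (sound_TV _ _ _ HC) in H2 end. congruence.
  - match goal with H1 : memS _ _ _ (TVc (cT s) _ _), H2 : memS _ _ _ (TVc (cT u) _ _) |- _ =>
      apply (sound_TV _ _ _ HC) in H1; apply (sound_TV _ _ _ HC) in H2 end. subst; auto.
  - split; [apply IHp1|apply IHp2]; auto.
  - left; apply IHp1; auto.
  - right; apply IHp2; auto.
  - match goal with H1 : memS _ _ _ (TVc (cT t) _ _) |- _ =>
      apply (sound_TV _ _ _ HC) in H1 end. subst. intros x Hx. apply (IHp (x :: L)). simpl.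
    match goal with H : forall _, _ -> memS _ _ _ _ |- _ => apply H end. auto.
  - match goal with H1 : memS _ _ _ (TVc (cT t) _ _) |- _ =>
      apply (sound_TV _ _ _ HC) in H1 end. subst. eexists. split; [eassumption|].
    apply (IHp (_ :: L)). simpl. eassumption.
  - eexists. apply (IHp (_ :: L)). simpl. eassumption.
Qed.
Fixpoint lookF (L : list nat) (k : nat) : list nat :=
  match L with
  | [] => [TVc (P 0 k) 0 0]
  | x :: L' => TVc (P 0 k) (enc (x :: L')) (envL (x :: L') k) ::
               match k with 0 => [] | S k' => lookF L' k' end
  end.

Fixpoint TVF (T : term) (L : list nat) : list nat :=
  match T with
  | tvar k => lookF L k
  | tzero => [TVc (P 1 0) (enc L) 0]
  | tsucc s => TVc (cT T) (enc L) (teval (envL L) T) :: TVF s L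
  | tplus s u => TVc (cT T) (enc L) (teval (envL L) T) :: TVF s L ++ TVF u L
  | tmul s u => TVc (cT T) (enc L) (teval (envL L) T) :: TVF s L ++ TVF u L
  end.

Lemma lookF_head L k : In (TVc (P 0 k) (enc L) (envL L k)) (lookF L k).
Proof. destruct L; simpl; left; reflexivity. Qed.

Lemma TVF_head T L : In (TVc (cT T) (enc L) (teval (envL L) T)) (TVF T L).
Proof. destruct T; simpl; try (left; reflexivity). apply lookF_head. Qed.

Ltac addP := repeat match goal with
  | H : context [P ?a ?b] |- _ =>
      lazymatch goal with
      | _ : a <= P a b |- _ => fail
      | _ => pose proof (P_ge1 a b); pose proof (P_ge2 a b)
      end
  | |- context [P ?a ?b] =>
      lazymatch goal with
      | _ : a <= P a b |- _ => fail
      | _ => pose proof (P_ge1 a b); pose proof (P_ge2 a b)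
      end
  end.

Ltac bnd := unfold TVc, TRc in *; cbn [enc] in *; addP; lia.

Lemma just_var M N : forall L k, (forall w, In w (lookF L k) -> M w /\ w < N) ->
  forall z, In z (lookF L k) -> JustS M N z.
Proof.
  induction L as [|x L IH]; intros k HF z Hz.
  - simpl in Hz. destruct Hz as [<-|[]].
    destruct (HF (TVc (P 0 k) 0 0)) as [_ B]; [simpl; auto|].
    left. exists (P 0 k). split; [bnd|]. exists 0. split; [bnd|]. exists 0. split; [bnd|].
    split; [reflexivity|]. left. exists k. split; [bnd|]. split; auto.
  - simpl in Hz. destruct Hz as [<-|Hz].
    + destruct (HF (TVc (P 0 k) (enc (x :: L)) (envL (x :: L) k))) as [_ B]; [simpl; auto|].
      left. exists (P 0 k). split; [bnd|]. exists (enc (x :: L)). split; [bnd|].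
      exists (envL (x :: L) k). split; [bnd|]. split; [reflexivity|].
      left. exists k. split; [bnd|]. split; auto. right.
      exists x. split; [bnd|]. exists (enc L). split; [bnd|]. split; [reflexivity|].
      destruct k as [|k]; [left; auto|right].
      exists k. split; [bnd|]. split; auto.
      apply (HF _). simpl. right. apply lookF_head.
    + destruct k as [|k]; [destruct Hz|].
      apply (IH k); auto. intros w Hw. apply HF. simpl. auto.
Qed.

Lemma just_TV M N : forall T L, (forall w, In w (TVF T L) -> M w /\ w < N) ->
  forall z, In z (TVF T L) -> JustS M N z.
Proof.
  induction T; intros L HF z Hz.
  - eapply just_var; eauto.
  - simpl in Hz. destruct Hz as [<-|[]].
    destruct (HF (TVc (P 1 0) (enc L) 0)) as [_ B]; [simpl; auto|].
    left. exists (P 1 0). split; [bnd|]. exists (enc L). split; [bnd|]. exists 0. split; [bnd|].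
    split; [reflexivity|]. right; left. auto.
  - simpl in Hz. destruct Hz as [<-|Hz].
    + destruct (HF (TVc (cT (tsucc T)) (enc L) (teval (envL L) (tsucc T)))) as [_ B]; [simpl; auto|].
      destruct (HF (TVc (cT T) (enc L) (teval (envL L) T))) as [M1 B1];
        [simpl; right; apply TVF_head|].
      simpl in B |- *.
      left. exists (P 2 (cT T)). split; [bnd|]. exists (enc L). split; [bnd|].
      exists (S (teval (envL L) T)). split; [bnd|]. split; [reflexivity|].
      right; right; left. exists (cT T). split; [bnd|]. exists (teval (envL L) T). split; [bnd|].
      auto.
    + apply (IHT L); auto. intros w Hw. apply HF. simpl; auto.
  - simpl in Hz. destruct Hz as [<-|Hz].
    + destruct (HF (TVc (cT (tplus T1 T2)) (enc L) (teval (envL L) (tplus T1 T2)))) as [_ B]; [simpl; auto|].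
      destruct (HF (TVc (cT T1) (enc L) (teval (envL L) T1))) as [M1 B1];
        [simpl; right; apply in_or_app; left; apply TVF_head|].
      destruct (HF (TVc (cT T2) (enc L) (teval (envL L) T2))) as [M2 B2];
        [simpl; right; apply in_or_app; right; apply TVF_head|].
      simpl in B |- *.
      left. eexists. split; [|eexists; split; [|eexists; split; [|split; [reflexivity|]]]]; [bnd|bnd|bnd|].
      right; right; right; left.
      exists (cT T1). split; [bnd|]. exists (cT T2). split; [bnd|].
      exists (teval (envL L) T1). split; [bnd|]. exists (teval (envL L) T2). split; [bnd|]. auto.
    + apply in_app_or in Hz. destruct Hz as [Hz|Hz]; [apply (IHT1 L)|apply (IHT2 L)]; auto;
        intros w Hw; apply HF; simpl; right; apply in_or_app; auto.
  - simpl in Hz. destruct Hz as [<-|Hz].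
    + destruct (HF (TVc (cT (tmul T1 T2)) (enc L) (teval (envL L) (tmul T1 T2)))) as [_ B]; [simpl; auto|].
      destruct (HF (TVc (cT T1) (enc L) (teval (envL L) T1))) as [M1 B1];
        [simpl; right; apply in_or_app; left; apply TVF_head|].
      destruct (HF (TVc (cT T2) (enc L) (teval (envL L) T2))) as [M2 B2];
        [simpl; right; apply in_or_app; right; apply TVF_head|].
      simpl in B |- *.
      left. eexists. split; [|eexists; split; [|eexists; split; [|split; [reflexivity|]]]]; [bnd|bnd|bnd|].
      right; right; right; right.
      exists (cT T1). split; [bnd|]. exists (cT T2). split; [bnd|].
      exists (teval (envL L) T1). split; [bnd|]. exists (teval (envL L) T2). split; [bnd|]. auto.
    + apply in_app_or in Hz. destruct Hz as [Hz|Hz]; [apply (IHT1 L)|apply (IHT2 L)]; auto;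
        intros w Hw; apply HF; simpl; right; apply in_or_app; auto.
Qed.
Definition wit (Q : nat -> Prop) : nat :=
  match excluded_middle_informative (exists x, Q x) with
  | left H => proj1_sig (constructive_indefinite_description _ H)
  | right _ => 0
  end.

Lemma wit_spec Q : (exists x, Q x) -> Q (wit Q).
Proof.
  intros H. unfold wit. destruct (excluded_middle_informative _) as [H'|H']; [|contradiction].
  apply proj2_sig.
Qed.

Fixpoint TRF (p : pf) (L : list nat) {struct p} : list nat :=
  TRc (cP p) (enc L) ::
  match p with
  | peq s u => TVF s L ++ TVF u L
  | plt s u => TVF s L ++ TVF u L
  | pand q r => TRF q L ++ TRF r L
  | por q r => if excluded_middle_informative (pfsem (envL L) q) then TRF q L else TRF r L
  | pall t q => TVF t L ++ flat_map (fun x => TRF q (x :: L)) (seq 0 (teval (envL L) t))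
  | pex t q => TVF t L ++ TRF q (wit (fun x => x < teval (envL L) t /\ pfsem (envL (x :: L)) q) :: L)
  | pexu q => TRF q (wit (fun x => pfsem (envL (x :: L)) q) :: L)
  end.

Lemma TRF_head p L : In (TRc (cP p) (enc L)) (TRF p L).
Proof. destruct p; simpl; left; reflexivity. Qed.

Lemma just_TR M N : forall p L, pfsem (envL L) p ->
  (forall w, In w (TRF p L) -> M w /\ w < N) ->
  forall z, In z (TRF p L) -> JustS M N z.
Proof.
  induction p; intros L Hp HF z Hz; simpl in Hz;
    (destruct Hz as [<-|Hz];
     [destruct (HF _ (or_introl eq_refl)) as [_ B]; simpl in B;
      right; eexists; split; [|eexists; split; [|split; [reflexivity|]]]; [bnd|bnd|] | ]).
  -
    destruct (HF (TVc (cT s) (enc L) (teval (envL L) s))) as [M1 B1];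
      [simpl; right; apply in_or_app; left; apply TVF_head|].
    destruct (HF (TVc (cT u) (enc L) (teval (envL L) u))) as [M2 B2];
      [simpl; right; apply in_or_app; right; apply TVF_head|].
    left. exists (cT s). split; [bnd|]. exists (cT u). split; [bnd|].
    exists (teval (envL L) s). split; [bnd|]. simpl in Hp. rewrite Hp in M1 |- *. auto.
  - apply in_app_or in Hz. destruct Hz as [Hz|Hz]; eapply just_TV; eauto;
      intros w Hw; apply HF; simpl; right; apply in_or_app; auto.
  - destruct (HF (TVc (cT s) (enc L) (teval (envL L) s))) as [M1 B1];
      [simpl; right; apply in_or_app; left; apply TVF_head|].
    destruct (HF (TVc (cT u) (enc L) (teval (envL L) u))) as [M2 B2];
      [simpl; right; apply in_or_app; right; apply TVF_head|].
    right; left. exists (cT s). split; [bnd|]. exists (cT u). split; [bnd|].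
    exists (teval (envL L) s). split; [bnd|]. exists (teval (envL L) u). split; [bnd|]. auto.
  - apply in_app_or in Hz. destruct Hz as [Hz|Hz]; eapply just_TV; eauto;
      intros w Hw; apply HF; simpl; right; apply in_or_app; auto.
  - destruct (HF (TRc (cP p1) (enc L))) as [M1 B1];
      [simpl; right; apply in_or_app; left; apply TRF_head|].
    destruct (HF (TRc (cP p2) (enc L))) as [M2 B2];
      [simpl; right; apply in_or_app; right; apply TRF_head|].
    right; right; left. exists (cP p1). split; [bnd|]. exists (cP p2). split; [bnd|]. auto.
  - destruct Hp as [Hp1 Hp2].
    apply in_app_or in Hz. destruct Hz as [Hz|Hz]; [eapply (IHp1 L)|eapply (IHp2 L)]; eauto;
      intros w Hw; apply HF; simpl; right; apply in_or_app; auto.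
  - destruct (excluded_middle_informative (pfsem (envL L) p1)) as [H1|H1].
    + destruct (HF (TRc (cP p1) (enc L))) as [M1 B1].
      { simpl. right. destruct (excluded_middle_informative (pfsem (envL L) p1)); [|contradiction].
        apply TRF_head. }
      right; right; right; left. exists (cP p1). split; [bnd|]. exists (cP p2). split; [bnd|]. auto.
    + destruct (HF (TRc (cP p2) (enc L))) as [M1 B1].
      { simpl. right. destruct (excluded_middle_informative (pfsem (envL L) p1)); [contradiction|].
        apply TRF_head. }
      right; right; right; left. exists (cP p1). split; [bnd|]. exists (cP p2). split; [bnd|]. auto.
  - destruct (excluded_middle_informative (pfsem (envL L) p1)) as [H1|H1].
    + eapply (IHp1 L); eauto. intros w Hw; apply HF; simpl; right.
      destruct (excluded_middle_informative (pfsem (envL L) p1)); [auto|contradiction].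
    + assert (H2 : pfsem (envL L) p2) by (destruct Hp; tauto).
      eapply (IHp2 L); eauto. intros w Hw; apply HF; simpl; right.
      destruct (excluded_middle_informative (pfsem (envL L) p1)); [contradiction|auto].
  -
    destruct (HF (TVc (cT t) (enc L) (teval (envL L) t))) as [M1 B1];
      [simpl; right; apply in_or_app; left; apply TVF_head|].
    right; right; right; right; left. exists (cT t). split; [bnd|]. exists (cP p). split; [bnd|].
    exists (teval (envL L) t). split; [bnd|]. split; [auto|]. split; [auto|].
    intros x Hx. apply (HF (TRc (cP p) (enc (x :: L)))). simpl. right. apply in_or_app. right.
    apply in_flat_map. exists x. split; [apply in_seq; lia|apply (TRF_head p (x :: L))].
  - apply in_app_or in Hz. destruct Hz as [Hz|Hz].
    + eapply just_TV; eauto. intros w Hw; apply HF; simpl; right; apply in_or_app; auto.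
    + apply in_flat_map in Hz. destruct Hz as [x [Hx Hz]]. apply in_seq in Hx.
      eapply (IHp (x :: L)); eauto.
      * simpl in Hp. apply Hp. lia.
      * intros w Hw; apply HF; simpl; right; apply in_or_app; right.
        apply in_flat_map. exists x. split; [apply in_seq; lia|auto].
  -
    set (w0 := wit (fun x => x < teval (envL L) t /\ pfsem (envL (x :: L)) p)).
    assert (Hw0 : w0 < teval (envL L) t /\ pfsem (envL (w0 :: L)) p) by (apply wit_spec; exact Hp).
    destruct (HF (TVc (cT t) (enc L) (teval (envL L) t))) as [M1 B1];
      [simpl; right; apply in_or_app; left; apply TVF_head|].
    right; right; right; right; right; left. exists (cT t). split; [bnd|]. exists (cP p). split; [bnd|].
    exists (teval (envL L) t). split; [bnd|]. split; auto. split; auto.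
    exists w0. split; [apply Hw0|].
    apply (HF (TRc (cP p) (enc (w0 :: L)))). simpl. right. apply in_or_app. right.
    exact (TRF_head p (w0 :: L)).
  - set (w0 := wit (fun x => x < teval (envL L) t /\ pfsem (envL (x :: L)) p)) in *.
    assert (Hw0 : w0 < teval (envL L) t /\ pfsem (envL (w0 :: L)) p) by (apply wit_spec; exact Hp).
    apply in_app_or in Hz. destruct Hz as [Hz|Hz].
    + eapply just_TV; eauto. intros w Hw; apply HF; simpl; right; apply in_or_app; auto.
    + eapply (IHp (w0 :: L)); eauto; [apply Hw0|].
      intros w Hw; apply HF; simpl; right; apply in_or_app; auto.
  -
    set (w0 := wit (fun x => pfsem (envL (x :: L)) p)).
    assert (Hw0 : pfsem (envL (w0 :: L)) p) by (apply wit_spec; exact Hp).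
    destruct (HF (TRc (cP p) (enc (w0 :: L)))) as [M1 B1]; [simpl; right; exact (TRF_head p (w0 :: L))|].
    right; right; right; right; right; right.
    exists (cP p). split; [bnd|]. exists w0. split; [bnd|]. split; auto.
  - set (w0 := wit (fun x => pfsem (envL (x :: L)) p)) in *.
    assert (Hw0 : pfsem (envL (w0 :: L)) p) by (apply wit_spec; exact Hp).
    eapply (IHp (w0 :: L)); eauto. intros w Hw; apply HF; simpl; right; auto.
Qed.

Lemma U0_complete p L : pfsem (envL L) p -> U0 (cP p) (enc L).
Proof.
  intros Hp. destruct (set_code (TRF p L)) as [c [d [N HN]]].
  exists c, d, N. split.
  - intros z Hz Hm. apply HN in Hm. eapply just_TR; eauto.
    intros w Hw. split; [apply HN; auto|]. apply HN in Hw. apply (memS_lt _ _ _ _ Hw).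
  - apply HN. apply TRF_head.
Qed.
Fixpoint U (m : nat) : nat -> nat -> Prop :=
  match m with 0 => U0 | S m' => fun e l => exists x, ~ U m' e (S (P x l)) end.

Lemma U0_sound p L : U0 (cP p) (enc L) -> pfsem (envL L) p.
Proof. intros [c [d [N [HC Hm]]]]. eapply sound_TR; eauto. Qed.

Definition NU0 : nf := nand (nall 10 (nv 0) (nor (nnot (nM (nv 10))) NJust)) (nM (nTR (nv 3) (nv 4))).

Lemma NU0_sem a : nholds a NU0 <->
  (forall z, z < a 0 -> ~ memS (a 2) (a 1) (a 0) z \/ JustS (memS (a 2) (a 1) (a 0)) (a 0) z) /\
  memS (a 2) (a 1) (a 0) (TRc (a 3) (a 4)).
Proof. reflexivity. Qed.

Definition fU0 : form := fexists (fexists (fexists (fbounded (compF ctx10 NU0)))).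

Lemma fU0_sem env : fholds env fU0 <-> U0 (env 0) (env 1).
Proof.
  unfold fU0, U0. cbn [fholds]. setoid_rewrite compF_ok'. setoid_rewrite NU0_sem.
  unfold actx. cbn [idx ctx10 Nat.eqb scons].
  split; intros [c [d [N H]]]; exists c, d, N; unfold Closed in *.
  - destruct H as [H1 H2]. split; auto. intros z Hz Hm. destruct (H1 z Hz); tauto.
  - destruct H as [H1 H2]. split; auto. intros z Hz.
    destruct (classic (memS c d N z)); auto.
Qed.

Lemma contract n g : ok false n g -> exists h, ok false n h /\ forall env,
  (exists x y, fholds (scons y (scons x env)) g) <-> exists c, fholds (scons c env) h.
Proof.
  intros Hg.
  destruct (main g false n Hg [(false, tsucc (tvar 0)); (false, tsucc (tvar 1))]
     (fun k => match k with 0 => 0 | 1 => 1 | S (S j) => S (S (S j)) end)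
     (fun k => k) (beq tzero tzero) true) as [h [Hh Hs]].
  exists h. split; auto. intros env.
  assert (E : forall c x y, (fun k => scons y (scons x (scons c env))
        (match k with 0 => 0 | 1 => 1 | S (S j) => S (S (S j)) end)) = scons y (scons x env)).
  { intros c x y. apply functional_extensionality; intros [|[|k]]; reflexivity. }
  split.
  - intros [x [y H]]. exists (x + y). rewrite Hs. cbn [psem teval]. unfold OP.
    exists x. split; [simpl; lia|]. exists y. split; [simpl; lia|]. rewrite E. simpl. auto.
  - intros [c H]. rewrite Hs in H. cbn [psem teval] in H. unfold OP in H.
    destruct H as [x [_ [y [_ [_ H]]]]]. rewrite E in H. eauto.
Qed.

Lemma decomp m f : ok true (S (S m)) f -> exists h, ok false (S m) h /\
  forall env, fholds env f <-> exists c, fholds (scons c env) h.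
Proof.
  induction f as [b|g IH|g IH]; intros Hok.
  - exists (fbounded (brename S b)). split; [exact I|]. intros env. cbn [fholds].
    split; [intros H; exists 0; apply bholds_rename; exact H|intros [c H]; rewrite bholds_rename in H; exact H].
  - simpl in Hok. destruct Hok as [_ Hok]. destruct (IH Hok) as [h' [Hh' Hs']].
    destruct (contract (S m) h' Hh') as [h [Hh Hs]].
    exists h. split; auto. intros env. simpl. rewrite <- Hs.
    split; intros [x H]; exists x; apply Hs'; auto.
  - exists (frename S (fforall g)). split.
    + apply ok_rename. simpl in Hok |- *. destruct Hok as [_ Hok]. split; [lia|]. auto.
    + intros env. split; [intros H; exists 0|intros [c H]];
        [apply fholds_rename; exact H|rewrite fholds_rename in H; exact H].
Qed.

Lemma U_univ m : forall f, ok true (S m) f -> exists e, forall L, fholds (envL L) f <-> U m e (enc L).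
Proof.
  induction m as [|m IH]; intros f Hf.
  - exists (cP (sig1 f)). intros L. rewrite (sig1_ok f Hf). simpl.
    split; [apply U0_complete|apply U0_sound].
  - destruct (decomp m f Hf) as [h [Hh Hs]].
    destruct (IH (dual h) (dual_ok h false (S m) Hh)) as [e He].
    exists e. intros L. rewrite Hs. simpl.
    split; intros [c H]; exists c.
    + rewrite <- (He (c :: L)). rewrite dual_holds. tauto.
    + rewrite <- (He (c :: L)), dual_holds in H. apply NNPP in H. exact H.
Qed.

Lemma U_sig m : exists f, ok true (S m) f /\ forall env, fholds env f <-> U m (env 0) (env 1).
Proof.
  induction m as [|m [f [Hf Hs]]].
  - exists fU0. split; [simpl; repeat split; lia|]. apply fU0_sem.
  - set (f1 := frename (fun j => match j with 0 => 2 | _ => 0 end) (dual f)).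
    assert (Hf1 : ok false (S m) f1) by (apply ok_rename; apply (dual_ok f true); auto).
    destruct (main f1 false (S m) Hf1 [] (fun k => k) (fun k => k)
       (compF ctx10 (nnot (neq (nv 0) (ns (npr (nv 1) (nv 3)))))) false) as [h [Hh Hhs]].
    exists (fexists (fforall h)). split; [simpl; repeat split; auto; lia|].
    intros env. cbn [fholds]. setoid_rewrite Hhs. cbn [psem]. unfold OP.
    setoid_rewrite compF_ok'. unfold f1. setoid_rewrite fholds_rename. setoid_rewrite dual_holds.
    unfold actx. cbn [nholds neval idx ctx10 Nat.eqb scons U].
    setoid_rewrite Hs. cbn [scons].
    split; intros [x H]; exists x.
    + intros HU. destruct (H (S (P x (env 1)))) as [H1|H1]; auto.
    + intros l. destruct (Nat.eq_dec l (S (P x (env 1)))) as [->|Hne]; auto.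
Qed.
Definition Dg m k := ~ U m k (enc [2 * k; S (2 * k)]).
Definition Ediag m x y := x = y \/
  exists q, (x = 2 * q \/ x = S (2 * q)) /\ (y = 2 * q \/ y = S (2 * q)) /\ Dg m q.

Lemma Ediag_equiv m : Equivalence (Ediag m).
Proof.
  split.
  - intros x. left; auto.
  - intros x y [->|[q [Hx [Hy H]]]]; [left; auto|right; exists q; auto].
  - intros x y z H1 H2. destruct H1 as [<-|[q [Hx [Hy H]]]]; [exact H2|].
    destruct H2 as [<-|[q' [Hy' [Hz H']]]]; [right; exists q; auto|].
    right. assert (q = q') by lia. subst. exists q'. auto.
Qed.

Definition B3n : nf :=
  nor (nnot (nor (neq (nv 2) (npl (nv 1) (nv 1))) (neq (nv 2) (ns (npl (nv 1) (nv 1))))))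
      (nnot (neq (nv 0) (ns (npr (npl (nv 1) (nv 1)) (ns (npr (ns (npl (nv 1) (nv 1))) nz)))))).
Definition B2n' : nf :=
  nex 20 (ns (nv 2)) (nand (nor (neq (nv 2) (npl (nv 20) (nv 20))) (neq (nv 2) (ns (npl (nv 20) (nv 20)))))
                           (nor (neq (nv 3) (npl (nv 20) (nv 20))) (neq (nv 3) (ns (npl (nv 20) (nv 20)))))).
Definition B1n' : nf := neq (nv 2) (nv 3).

Lemma B3_sem e : bholds e (compF ctx10 B3n) <->
  ~ (e 2 = e 1 + e 1 \/ e 2 = S (e 1 + e 1)) \/ ~ e 0 = S (P (e 1 + e 1) (S (P (S (e 1 + e 1)) 0))).
Proof. rewrite compF_ok'. reflexivity. Qed.
Lemma B2_sem' e : bholds e (compF ctx10 B2n') <-> exists q, q < S (e 2) /\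
  ((e 2 = q + q \/ e 2 = S (q + q)) /\ (e 3 = q + q \/ e 3 = S (q + q))).
Proof. rewrite compF_ok'. reflexivity. Qed.
Lemma B1_sem' e : bholds e (compF ctx10 B1n') <-> e 2 = e 3.
Proof. rewrite compF_ok'. reflexivity. Qed.

Lemma Ediag_pi m : exists f, ok false (S m) f /\ forall x y, Ediag m x y <-> fholds (env2 x y) f.
Proof.
  destruct (U_sig m) as [fU [HfU HsU]].
  set (f1 := frename (fun j => match j with 0 => 1 | _ => 0 end) (dual fU)).
  assert (Hf1 : ok false (S m) f1) by (apply ok_rename; apply (dual_ok fU true); auto).
  destruct (main f1 false (S m) Hf1 [] (fun k => k) (fun k => k) (compF ctx10 B3n) false) as [f2 [Hf2 Hs2]].
  destruct (main f2 false (S m) Hf2 [] (fun k => k) (fun k => k) (compF ctx10 B2n') true) as [f3 [Hf3 Hs3]].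
  destruct (main f3 false (S m) Hf3 [] (fun k => k) (fun k => k) (compF ctx10 B1n') false) as [f4 [Hf4 Hs4]].
  exists (fforall (fforall f4)). split; [simpl; repeat split; auto; lia|].
  intros x y. cbn [fholds].
  setoid_rewrite Hs4. cbn [psem]. unfold OP. setoid_rewrite Hs3. cbn [psem]. unfold OP.
  setoid_rewrite Hs2. cbn [psem]. unfold OP.
  setoid_rewrite B1_sem'. setoid_rewrite B2_sem'. setoid_rewrite B3_sem.
  unfold f1. setoid_rewrite fholds_rename. setoid_rewrite dual_holds.
  setoid_rewrite HsU. cbn [scons env2].
  unfold Ediag, Dg. split.
  - intros [->|[q [Hx [Hy HD]]]] k l; [left; auto|right].
    split.
    + exists q. split; [lia|]. split; lia.
    + destruct (classic ((x = k + k \/ x = S (k + k)) /\ l = S (P (k + k) (S (P (S (k + k)) 0))))) as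
        [[Hk Hl]|Hn]; [|left; tauto].
      right. assert (q = k) by lia. subst q l. 
      replace (k + k) with (2 * k) by lia. exact HD.
  - intros H. destruct (Nat.eq_dec x y) as [->|Hne]; [left; auto|right].
    assert (Hk : exists k, x = 2 * k \/ x = S (2 * k)).
    { clear. induction x as [|x [k [Hk|Hk]]]; [exists 0; lia|exists k; lia|exists (S k); lia]. }
    destruct Hk as [k Hk].
    destruct (H k (S (P (k + k) (S (P (S (k + k)) 0))))) as [He|[[q [_ [Hx Hy]]] H2]]; [contradiction|].
    assert (q = k) by lia. subst q. exists k. split; [lia|]. split; [lia|].
    destruct H2 as [H2|H2].
    + exfalso. destruct H2 as [H2|H2]; apply H2; [lia|reflexivity].
    + replace (2 * k) with (k + k) by lia. exact H2.
Qed.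

Lemma Ediag_not_sig m : ~ Sigma0 (S m) (Ediag m).
Proof.
  intros [f [Hf Hs]]. apply isSigma_ok in Hf.
  destruct (U_univ m f Hf) as [e He].
  specialize (Hs (2 * e) (S (2 * e))). specialize (He [2 * e; S (2 * e)]).
  assert (Hc : fholds (env2 (2 * e) (S (2 * e))) f <-> fholds (envL [2 * e; S (2 * e)]) f)
    by reflexivity.
  rewrite Hc, He in Hs.
  assert (HE : Ediag m (2 * e) (S (2 * e)) <-> Dg m e).
  { unfold Ediag. split.
    - intros [H|[q [Hx [Hy H]]]]; [lia|]. assert (q = e) by lia. subst. auto.
    - intros H. right. exists e. auto. }
  unfold Dg in HE. cbn [enc] in Hs, HE. tauto.
Qed.

Lemma part1 n (hn : 1 <= n) : forall E : nat -> nat -> Prop,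
  Equivalence E -> ~ Sigma0 n E -> ~ graphable (Sigma0 n) E.
Proof.
  intros E _ HnS [G [[fG [HfG HGf]] [Hsym [Hirr HE]]]]. apply HnS.
  destruct (reach_sig n fG hn (isSigma_ok _ _ HfG)) as [f [Hok Hf]].
  exists f. split; [apply ok_isSigma; auto|]. intros x y.
  assert (EG : G = fun a b => fholds (env2 a b) fG).
  { apply functional_extensionality; intro a; apply functional_extensionality; intro b.
    apply propositional_extensionality. apply HGf. }
  rewrite HE, Hf, EG. tauto.
Qed.

Theorem proposition3p1 (n : nat) (hn : 1 <= n) :
  (forall E : nat -> nat -> Prop,
      Equivalence E -> ~ Sigma0 n E -> ~ graphable (Sigma0 n) E) /\
  (exists E : nat -> nat -> Prop,
      Equivalence E /\ Pi0 n E /\ ~ graphable (Sigma0 n) E).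
Proof.
  split; [apply part1; auto|].
  destruct n as [|m]; [lia|].
  exists (Ediag m). split; [apply Ediag_equiv|]. split.
  - destruct (Ediag_pi m) as [f [Hf Hs]]. exists f. split; [apply ok_isSigma; auto|auto].
  - apply part1; [lia|apply Ediag_equiv|apply Ediag_not_sig].
Qed.
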